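(* In the setting described in the context, $f_{avg}(\pi^{io})\ge\mathbb{E}_{v\sim h}[f(\psi^c(v))]$.
   Context: Let $I=\{1,\dots,n\}$ be a set of items, $B$ a positive integer, $[B]=\{1,\dots,B\}$, $[0;B]=\{0,1,\dots,B\}$; for $u,w\in[0;B]^I$, $u\le w$ means coordinatewise. Let $f:[0;B]^I\to\mathbb{R}_{\ge0}$ be monotone ($u\le w\Rightarrow f(u)\le f(w)$) and lattice submodular ($f(u\vee s\mathbf{1}_i)-f(u)\ge f(w\vee s\mathbf{1}_i)-f(w)$ for all $u\le w$, $s\in[0;B]$, $i\in I$). Each item $i$ has a random state $\Phi(i)\in[B]$, independent across items, with known distribution $p_i(s)=\Pr[\Phi(i)=s]$; the state of an item is observed only after selecting it. Item $i$ in state $s$ has a nonnegative integer cost $c_i(s)$, with $c_i(s)\ge c_i(s')$ whenever $s\ge s'$. $C$ is a positive integer budget and $\mathcal{I}^{out}\subseteq 2^I$ is a downward-closed family. For $S\subseteq I$ and $\phi\in[B]^I$, $\phi_S$ equals $\phi(i)$ on $S$ and $0$ elsewhere; $\overline{f}(S)=\mathbb{E}[f(\Phi_S)]$, $F(\overline{x})=\sum_{U\subseteq I}\prod_{i\in U}\overline{x}(i)\prod_{i\notin U}(1-\overline{x}(i))\overline{f}(U)$, $P_{\mathcal{I}^{out}}=\mathrm{conv}\{\mathbf{1}_S: S\in\mathcal{I}^{out}\}$. For a policy $\pi$ (which sequentially selects items based on states observed so far), $I(\pi,\phi)$ is the set selected under realization $\phi$ and $f_{avg}(\pi)=\mathbb{E}[f(\Phi_{I(\pi,\Phi)})]$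 (expectation also over the policy's randomness). A monotone $(\beta,\gamma)$-balanced CRS for $\mathcal{I}^{out}$ is a (possibly randomized) scheme that, for any $\overline{z}\in\beta\cdot P_{\mathcal{I}^{out}}$ and the random set $R$ containing each $i$ independently with probability $\overline{z}(i)$, maps $R$ to $\chi(R)\subseteq R$ with $\chi(R)\in\mathcal{I}^{out}$, such that $\Pr[i\in\chi(R)\mid i\in R]\ge\gamma$ for all $i$, and for $i\in R\subseteq R'$, $\Pr[i\in\chi(R)]\ge\Pr[i\in\chi(R')]$. Assume such a scheme $\chi^{io}$ exists for given $\beta,\gamma\in[0,1]$. Problem P1: variables $x(i,t)\ge0$ for $i\in I$, $t\in\{1,\dots,C-c_i(B)\}$, $\overline{x}(i)=\sum_t x(i,t)$; maximize $F(\overline{x})$ subject to $\overline{x}(i)\le1$, $\overline{x}\in P_{\mathcal{I}^{out}}$, and for all $t\in\{1,\dots,C\}$: $\sum_{i\in I}\mathbb{E}[\min\{c_i(\Phi(i)),t\}]\sum_{t'=1}^{t}x(i,t')\le 2t$. Policy $\pi^{io}$: (1) compute a solution $y$ of P1 by the stochastic continuous greedy algorithm of Asadpour and Nazerzadeh (2016) with stopping time $l=\min\{\beta,1/4\}$ and step size $\delta=o(n^{-3})$; let $\overline{y}(i)=\sum_t y(i,t)$. (2) Form a random set $R^{io}$ containing each $i$ independently with probability $\overline{y}(i)$, and apply $\chi^{io}$ (with $\overline{z}=\overline{y}$) to obtain $\chi^{io}(R^{io})\in\mathcal{I}^{out}$. (3) For each $i\in\chi^{io}(R^{io})$ independently sample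 $t^{io}(i)\in\{1,\dots,C-c_i(B)\}$ with probability $y(i,t)/\overline{y}(i)$; sort $\chi^{io}(R^{io})$ in nondecreasing order of $t^{io}$ (ties broken by least index). Starting with $C'=0$, go through the items in this order: if $C'\le t^{io}(i)$, select $i$, observe $\Phi(i)$ and update $C'\leftarrow C'+c_i(\Phi(i))$; otherwise skip $i$. Distribution $h$: $v\in[0;B]^I$ has independent coordinates with $\Pr[v(i)=j]=p_i(j)\overline{y}(i)$ for $j\in[B]$ and $\Pr[v(i)=0]=1-\overline{y}(i)$; $R(v)=\{i:v(i)\ne0\}$. Mapping $\psi^a$: $\psi^a(v)(i)=v(i)$ if $i\in\chi^{io}(R(v))$, else $0$. Mapping $\psi^b$: for each $i\in R(v)$ independently sample $t(i)\in\{1,\dots,C-c_i(B)\}$ with $\Pr[t(i)=t]=y(i,t)/\overline{y}(i)$; $\psi^b(v)(i)=v(i)$ if $i\in R(v)$ and $\sum_{i'\in R(v)\setminus\{i\},\,t(i')\le t(i)}c_{i'}(v(i'))\le t(i)$, else $0$. Mapping $\psi^c$: apply $\psi^a$ and $\psi^b$ to $v$ independently and set $\psi^c(v)(i)=v(i)$ if $\psi^a(v)(i)=v(i)$ and $\psi^b(v)(i)=v(i)$, and $0$ otherwise. *)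

(* Defs.v *)
(* everything is finite, expectations are finite weighted sums. *)
From HB Require Import structures.
From mathcomp Require Import all_boot all_order all_algebra.
Set Implicit Arguments. Unset Strict Implicit. Unset Printing Implicit Defensive.
Import Order.TTheory GRing.Theory Num.Theory.
Local Open Scope ring_scope.

(* Items I = 'I_n ; [0;B] = 'I_B.+1 ; state 0 = "not selected" ; times in 'I_C.+1 *)
Definition vec (n B : nat) := {ffun 'I_n -> 'I_B.+1}.

Definition vle n B (u w : vec n B) := forall i, (u i <= w i)%N.

Definition join_at n B (u : vec n B) (i : 'I_n) (s : 'I_B.+1) : vec n B :=
  [ffun j => if j == i then (if (u i <= s)%N then s else u i) else u j].

Definition monotone_fun (R : realFieldType) n B (f : vec n B -> R) :=
  forall u w : vec n B, vle u w -> f u <= f w.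

Definition lattice_submodular (R : realFieldType) n B (f : vec n B -> R) :=
  forall (u w : vec n B), vle u w -> forall (s : 'I_B.+1) (i : 'I_n),
    f (join_at w i s) - f w <= f (join_at u i s) - f u.

Definition restrict n B (phi : vec n B) (S : {set 'I_n}) : vec n B :=
  [ffun i => if i \in S then phi i else ord0].

Definition downward_closed n (F : {set {set 'I_n}}) :=
  forall S T : {set 'I_n}, T \subset S -> S \in F -> T \in F.

Definition inP (R : realFieldType) n (F : {set {set 'I_n}}) (z : 'I_n -> R) :=
  exists lam : {set 'I_n} -> R,
    [/\ forall S, 0 <= lam S, \sum_(S : {set 'I_n}) lam S = 1,
        forall S, lam S != 0 -> S \in F
      & forall i, z i = \sum_(S : {set 'I_n} | i \in S) lam S].

Definition in_scaledP (R : realFieldType) n (beta : R) (F : {set {set 'I_n}})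
  (z : 'I_n -> R) :=
  exists x : 'I_n -> R, inP F x /\ forall i, z i = beta * x i.

(* Pr[R = Rs] when each i is in R independently with prob z i *)
Definition bern_set (R : realFieldType) n (z : 'I_n -> R) (Rs : {set 'I_n}) : R :=
  \prod_(i < n) (if i \in Rs then z i else 1 - z i).

(* Pr[i \in chi(Rs)] for a randomized scheme given as a kernel *)
Definition pr_in (R : realFieldType) n (K : {set 'I_n} -> {set 'I_n} -> R)
  (Rs : {set 'I_n}) (i : 'I_n) : R :=
  \sum_(S : {set 'I_n} | i \in S) K Rs S.

(* chi z Rs S = Pr[chi(Rs) = S] for the scheme applied with vector z *)
Definition monotone_balanced_CRS (R : realFieldType) n (beta gamma : R)
  (F : {set {set 'I_n}}) (chi : ('I_n -> R) -> {set 'I_n} -> {set 'I_n} -> R) :=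
  forall z : 'I_n -> R, in_scaledP beta F z ->
  [/\ forall Rs S, 0 <= chi z Rs S,
      forall Rs, \sum_(S : {set 'I_n}) chi z Rs S = 1,
      forall Rs S, chi z Rs S != 0 -> S \subset Rs /\ S \in F,
      (* Pr[i \in chi(R) | i \in R] >= gamma, written without division *)
      forall i, gamma * z i <=
         \sum_(Rs : {set 'I_n} | i \in Rs) bern_set z Rs * pr_in (chi z) Rs i
    & forall i (Rs Rs' : {set 'I_n}), i \in Rs -> Rs \subset Rs' ->
         pr_in (chi z) Rs' i <= pr_in (chi z) Rs i].

Definition ybar (R : realFieldType) n C (y : 'I_n -> 'I_C.+1 -> R) (i : 'I_n) : R :=
  \sum_(t : 'I_C.+1) y i t.

(* Pr[t = tt] where t(i) ~ y(i,.)/ybar(i) independently for i \in S,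
   and t(i) = 0 (dummy) for i \notin S *)
Definition time_w (R : realFieldType) n C (y : 'I_n -> 'I_C.+1 -> R)
  (S : {set 'I_n}) (tt : {ffun 'I_n -> 'I_C.+1}) : R :=
  \prod_(i < n) (if i \in S then y i (tt i) / ybar y i else (tt i == ord0)%:R).

Definition state_w (R : realFieldType) n B (p : 'I_n -> 'I_B.+1 -> R) (phi : vec n B) : R :=
  \prod_(i < n) p i (phi i).

Definition io_order n C (tt : {ffun 'I_n -> 'I_C.+1}) (S : {set 'I_n}) : seq 'I_n :=
  sort (fun i j : 'I_n => (tt i < tt j)%N || ((tt i == tt j) && (i <= j)%N)) (enum S).

Definition io_selected n B C (c : 'I_n -> 'I_B.+1 -> nat) (phi : vec n B)
  (tt : {ffun 'I_n -> 'I_C.+1}) (S : {set 'I_n}) : {set 'I_n} :=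
  (foldl (fun (st : nat * {set 'I_n}) (i : 'I_n) =>
            if (st.1 <= tt i)%N then (st.1 + c i (phi i), i |: st.2)%N else st)
         (0%N, set0) (io_order tt S)).2.

(* f_avg(pi^io) : expectation over Phi, R^io, chi^io, t^io *)
Definition favg_io (R : realFieldType) n B C (f : vec n B -> R)
  (p : 'I_n -> 'I_B.+1 -> R) (c : 'I_n -> 'I_B.+1 -> nat)
  (y : 'I_n -> 'I_C.+1 -> R)
  (chi : ('I_n -> R) -> {set 'I_n} -> {set 'I_n} -> R) : R :=
  \sum_(phi : vec n B) state_w p phi *
  \sum_(Rs : {set 'I_n}) bern_set (ybar y) Rs *
  \sum_(S : {set 'I_n}) chi (ybar y) Rs S *
  \sum_(tt : {ffun 'I_n -> 'I_C.+1}) time_w y S tt *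
     f (restrict phi (io_selected c phi tt S)).

Definition h_w (R : realFieldType) n B C (p : 'I_n -> 'I_B.+1 -> R)
  (y : 'I_n -> 'I_C.+1 -> R) (v : vec n B) : R :=
  \prod_(i < n) (if v i == ord0 then 1 - ybar y i else p i (v i) * ybar y i).

Definition Rv n B (v : vec n B) : {set 'I_n} := [set i | v i != ord0].

(* psi^a, given the sampled output S = chi(R(v)) *)
Definition psi_a n B (v : vec n B) (S : {set 'I_n}) : vec n B :=
  [ffun i => if i \in S then v i else ord0].

(* psi^b, given the sampled times tt *)
Definition psi_b n B C (c : 'I_n -> 'I_B.+1 -> nat) (v : vec n B)
  (tt : {ffun 'I_n -> 'I_C.+1}) : vec n B :=
  [ffun i => if (i \in Rv v) &&
      (\sum_(i' in Rv v | (i' != i) && (tt i' <= tt i)%N) c i' (v i') <= tt i)%N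
     then v i else ord0].

Definition psi_c n B C (c : 'I_n -> 'I_B.+1 -> nat) (v : vec n B)
  (S : {set 'I_n}) (tt : {ffun 'I_n -> 'I_C.+1}) : vec n B :=
  [ffun i => if (psi_a v S i == v i) && (psi_b c v tt i == v i) then v i else ord0].

(* E_{v ~ h}[ f(psi^c(v)) ] (psi^a and psi^b use independent randomness) *)
Definition Eh_psi_c (R : realFieldType) n B C (f : vec n B -> R)
  (p : 'I_n -> 'I_B.+1 -> R) (c : 'I_n -> 'I_B.+1 -> nat)
  (y : 'I_n -> 'I_C.+1 -> R)
  (chi : ('I_n -> R) -> {set 'I_n} -> {set 'I_n} -> R) : R :=
  \sum_(v : vec n B) h_w p y v *
  \sum_(S : {set 'I_n}) chi (ybar y) (Rv v) S *
  \sum_(tt : {ffun 'I_n -> 'I_C.+1}) time_w y (Rv v) tt *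
     f (psi_c c v S tt).

(* Main.v *)
Require Import Defs.
From HB Require Import structures.
From mathcomp Require Import all_boot all_order all_algebra.
From mathcomp Require Import zify.
Import Order.TTheory GRing.Theory Num.Theory.
Local Open Scope ring_scope.

Lemma pick_sum (R : ringType) (T : finType) (F : T -> R) (a : T) :
  \sum_(s : T) F s * (s == a)%:R = F a.
Proof.
rewrite (bigD1 a) //= eqxx mulr1 big1 ?addr0 // => s /negbTE ->.
by rewrite mulr0.
Qed.

Lemma ffun_eq_prod (R : comRingType) (I : finType) (T : eqType)
  (u v : {ffun I -> T}) :
  ((u == v)%:R : R) = \prod_i ((u i == v i)%:R : R).
Proof.
have [->|neq] := eqVneq u v.
  by rewrite big1 // => i _; rewrite eqxx.
case: (pickP (fun i => u i != v i)) => [i Hi|H].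
  by rewrite (bigD1 i) //= (negbTE Hi) mul0r.
by case/eqP: neq; apply/ffunP => i; move/negbFE: (H i) => /eqP.
Qed.

Lemma fiber (R : comRingType) (I J : finType) (w : I -> R) (g : I -> J)
  (F : J -> R) :
  \sum_x w x * F (g x) = \sum_y F y * \sum_x w x * (g x == y)%:R.
Proof.
transitivity (\sum_x \sum_y w x * (F y * (y == g x)%:R)).
  by apply: eq_bigr => x _; rewrite -big_distrr /= pick_sum.
rewrite exchange_big; apply: eq_bigr => y _; rewrite big_distrr.
by apply: eq_bigr => x _ /=; rewrite mulrCA eq_sym.
Qed.

Lemma sum_set_ffun (R : nmodType) n (G : {set 'I_n} -> R) :
  \sum_Rs G Rs = \sum_(f : {ffun 'I_n -> bool}) G [set i | f i].
Proof.
rewrite (reindex (fun f : {ffun 'I_n -> bool} => [set i | f i])) //=.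
exists (fun S : {set 'I_n} => [ffun i => i \in S] : {ffun 'I_n -> bool}) => [f _|S _].
  by apply/ffunP => i; rewrite ffunE inE.
by apply/setP => i; rewrite inE ffunE.
Qed.

Section Key.
Local Open Scope nat_scope.

Lemma fold_grow n B C (c : 'I_n -> 'I_B.+1 -> nat) (phi : vec n B)
  (tt : {ffun 'I_n -> 'I_C.+1}) (l : seq 'I_n) (st : nat * {set 'I_n}) (i : 'I_n) :
  i \in st.2 ->
  i \in (foldl (fun (st : nat * {set 'I_n}) (i : 'I_n) =>
            if (st.1 <= tt i)%N then (st.1 + c i (phi i), i |: st.2)%N else st)
         st l).2.
Proof.
elim: l st => [|x l IH] st //= Hi; apply: IH.
by case: ifP => //= _; rewrite !inE Hi orbT.
Qed.

Lemma fold_cost n B C (c : 'I_n -> 'I_B.+1 -> nat) (phi : vec n B)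
  (tt : {ffun 'I_n -> 'I_C.+1}) (l : seq 'I_n) (st : nat * {set 'I_n}) :
  (foldl (fun (st : nat * {set 'I_n}) (i : 'I_n) =>
            if (st.1 <= tt i)%N then (st.1 + c i (phi i), i |: st.2)%N else st)
         st l).1 <= st.1 + \sum_(x <- l) c x (phi x).
Proof.
elim: l st => [|x l IH] st /=; first by rewrite big_nil addn0.
rewrite big_cons; apply: leq_trans (IH _) _.
case: ifP => _ /=; lia.
Qed.

Lemma key n B C (c : 'I_n -> 'I_B.+1 -> nat) (phi : vec n B)
  (tt : {ffun 'I_n -> 'I_C.+1}) (S : {set 'I_n}) (i : 'I_n) :
  i \in S ->
  \sum_(i' < n | (i' \in S) && (i' != i) && (tt i' <= tt i)) c i' (phi i') <= tt i ->
  i \in io_selected c phi tt S.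
Proof.
move=> iS Hsum.
rewrite /io_selected /io_order.
set r := (fun i j : 'I_n => (tt i < tt j) || ((tt i == tt j) && (i <= j))).
have rT : transitive r.
  by move=> a b d; rewrite /r -!val_eqE /=; lia.
have rtot : total r by move=> a b; rewrite /r -!val_eqE /=; lia.
have : sorted r (sort r (enum S)) by apply: sort_sorted.
rewrite sorted_pairwise //.
have : uniq (sort r (enum S)) by rewrite sort_uniq enum_uniq.
have : {subset sort r (enum S) <= S} by move=> x; rewrite mem_sort mem_enum.
have : i \in sort r (enum S) by rewrite mem_sort mem_enum.
move: (sort r (enum S)) => s.
case/splitPr => s1 s2 Hsub Hu Hp.
rewrite foldl_cat /=.
set st1 := foldl _ _ s1.
have Hc : st1.1 <= tt i.
  apply: leq_trans (@fold_cost _ _ _ c phi tt s1 (0, set0)) _.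
  rewrite add0n; apply: leq_trans Hsum.
  rewrite big_uniq; last by move: Hu; rewrite cat_uniq => /and3P[].
  rewrite big_mkcond [X in _ <= X]big_mkcond /=; apply: leq_sum => x _.
  case: ifP => // xs1.
  have -> : x \in S by apply: Hsub; rewrite mem_cat xs1.
  have -> : x != i.
    apply/eqP => E; move: Hu; rewrite cat_uniq => /and3P[_ /hasPn H _].
    by move: (H x); rewrite -E inE eqxx xs1 => /(_ isT).
  move: Hp; rewrite pairwise_cat => /andP[/allrelP H _].
  move: (H x i xs1); rewrite inE eqxx /= => /(_ isT); rewrite /r.
  by move=> /orP[H1|/andP[/eqP -> _]]; rewrite ?leqnn ?(ltnW H1).
rewrite Hc; apply: fold_grow; by rewrite /= !inE eqxx.
Qed.
End Key.
Definition proj n C (S : {set 'I_n}) (tt : {ffun 'I_n -> 'I_C.+1}) : {ffun 'I_n -> 'I_C.+1} :=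
  [ffun i => if i \in S then tt i else ord0].
Arguments proj {n C}.

Lemma h_identity (R : realFieldType) n B C (p : 'I_n -> 'I_B.+1 -> R)
  (y : 'I_n -> 'I_C.+1 -> R) (F : vec n B -> R) :
  (forall i, p i ord0 = 0) -> (forall i, \sum_(s : 'I_B.+1) p i s = 1) ->
  \sum_v h_w p y v * F v =
  \sum_phi state_w p phi * \sum_Rs bern_set (ybar y) Rs * F (restrict phi Rs).
Proof.
move=> Hp0 Hp1.
transitivity (\sum_(x : vec n B * {set 'I_n})
   (state_w p x.1 * bern_set (ybar y) x.2) * F (restrict x.1 x.2)); last first.
  rewrite -(pair_bigA _ (fun phi Rs => state_w p phi * bern_set (ybar y) Rs * F (restrict phi Rs))) /=.
  apply: eq_bigr => phi _; rewrite big_distrr.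
  by apply: eq_bigr => Rs _ /=; rewrite mulrA.
rewrite (@fiber R _ _ (fun x : vec n B * {set 'I_n} => state_w p x.1 * bern_set (ybar y) x.2)
   (fun x => restrict x.1 x.2) F).
apply: eq_bigr => v _; rewrite mulrC; congr (_ * _).
rewrite -(pair_bigA _ (fun phi Rs => state_w p phi * bern_set (ybar y) Rs * (restrict phi Rs == v)%:R)) /=.
pose K i (s : 'I_B.+1) (b : bool) := p i s * (if b then ybar y i else 1 - ybar y i) *
   ((if b then s else ord0) == v i)%:R.
transitivity (\sum_(phi : vec n B) \sum_(Rs : {set 'I_n}) \prod_i K i (phi i) (i \in Rs)); last first.
  apply: eq_bigr => phi _; apply: eq_bigr => Rs _.
  rewrite ffun_eq_prod /state_w /bern_set -!big_split /=.
  by apply: eq_bigr => i _; rewrite /K ffunE; case: (i \in Rs).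
transitivity (\sum_(phi : vec n B) \prod_i \sum_(b : bool) K i (phi i) b); last first.
  apply: eq_bigr => phi _; rewrite sum_set_ffun bigA_distr_bigA /=.
  by apply: eq_bigr => g _; apply: eq_bigr => i _; rewrite inE.
rewrite -(bigA_distr_bigA (fun i s => \sum_(b : bool) K i s b)).
apply: eq_bigr => i _; rewrite /K.
under eq_bigr do rewrite big_bool /=.
rewrite big_split /= pick_sum.
under eq_bigr do rewrite -mulrA.
rewrite -big_distrl /= Hp1 mul1r.
case: eqP => [->|/eqP ne]; first by rewrite Hp0 mul0r add0r mulr1.
by rewrite eq_sym (negbTE ne) mulr0 addr0.
Qed.

Lemma time_marg (R : realFieldType) n C (y : 'I_n -> 'I_C.+1 -> R)
  (Rs S : {set 'I_n}) (tt' : {ffun 'I_n -> 'I_C.+1}) :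
  S \subset Rs -> (forall i, i \in Rs -> ybar y i != 0) ->
  \sum_(tt : {ffun 'I_n -> 'I_C.+1}) time_w y Rs tt * ((proj S tt == tt')%:R) = time_w y S tt'.
Proof.
move=> /subsetP sub ynz.
pose a i (t : 'I_C.+1) := (if i \in Rs then y i t / ybar y i else (t == ord0)%:R) *
   ((if i \in S then t else ord0) == tt' i)%:R.
transitivity (\sum_(tt : {ffun 'I_n -> 'I_C.+1}) \prod_i a i (tt i)).
  apply: eq_bigr => tt _; rewrite ffun_eq_prod /time_w -big_split /=.
  by apply: eq_bigr => i _; rewrite /a ffunE.
rewrite -(bigA_distr_bigA a); apply: eq_bigr => i _; rewrite /a.
case: (boolP (i \in S)) => iS.
  by rewrite (sub i iS) pick_sum.
case: (boolP (i \in Rs)) => iR.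
  rewrite -big_distrl -big_distrl /=.
  have -> : \sum_t y i t = ybar y i by [].
  by rewrite divff ?ynz // mul1r eq_sym.
under eq_bigr do rewrite mulrC.
by rewrite pick_sum eq_sym.
Qed.

Lemma vle_main n B C (c : 'I_n -> 'I_B.+1 -> nat) (phi : vec n B) (Rs S : {set 'I_n})
  (tt : {ffun 'I_n -> 'I_C.+1}) :
  (forall i, phi i != ord0) -> S \subset Rs ->
  vle (psi_c c (restrict phi Rs) S tt) (restrict phi (io_selected c phi (proj S tt) S)).
Proof.
move=> phinz /subsetP sub i.
rewrite /psi_c ffunE; case: ifP => [/andP[Ha Hb]|_]; last by [].
set v := restrict phi Rs.
case: (eqVneq (v i) ord0) => [->//|vnz].
have iS : i \in S.
  move: Ha; rewrite /psi_a ffunE; case: ifP => // _ /eqP E.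
  by rewrite -E eqxx in vnz.
have iR := sub i iS.
have vE : forall j, j \in Rs -> v j = phi j by move=> j jR; rewrite /v /restrict ffunE jR.
move: Hb; rewrite /psi_b ffunE; case: ifP => [/andP[_ Hsum] _|_ /eqP E]; last first.
  by rewrite -E eqxx in vnz.
have Hsel : i \in io_selected c phi (proj S tt) S.
  apply: key => //.
  have -> : proj S tt i = tt i by rewrite /proj ffunE iS.
  apply: (leq_trans _ Hsum).
  rewrite [X in (X <= _)%N]big_mkcond [X in (_ <= X)%N]big_mkcond /=.
  apply: leq_sum => j _.
  case: (boolP (j \in S)) => jS //=.
  have jR := sub j jS.
  have -> : j \in Rv v by rewrite inE vE // phinz.
  by rewrite /proj /restrict !ffunE jS jR.
by rewrite vE // ffunE Hsel.
Qed.

Theorem lemma7 (R : realFieldType) (n B C : nat) (f : vec n B -> R)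
  (p : 'I_n -> 'I_B.+1 -> R) (c : 'I_n -> 'I_B.+1 -> nat)
  (Iout : {set {set 'I_n}}) (beta gamma : R)
  (chi : ('I_n -> R) -> {set 'I_n} -> {set 'I_n} -> R)
  (y : 'I_n -> 'I_C.+1 -> R) :
  (0 < B)%N -> (0 < C)%N ->
  (forall u, 0 <= f u) -> monotone_fun f -> lattice_submodular f ->
  (forall i s, 0 <= p i s) -> (forall i, p i ord0 = 0) ->
  (forall i, \sum_(s : 'I_B.+1) p i s = 1) ->
  (forall i (s s' : 'I_B.+1), (0 < s')%N -> (s' <= s)%N -> (c i s' <= c i s)%N) ->
  downward_closed Iout ->
  0 <= beta <= 1 -> 0 <= gamma <= 1 ->
  monotone_balanced_CRS beta gamma Iout chi ->
  (* y is the solution returned in step (1): a feasible point of P1 ... *)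
  (forall i t, 0 <= y i t) ->
  (forall i (t : 'I_C.+1), y i t != 0 -> (1 <= t)%N && (t <= C - c i ord_max)%N) ->
  (forall i, ybar y i <= 1) ->
  inP Iout (ybar y) ->
  (forall t : nat, (1 <= t <= C)%N ->
     \sum_(i < n) (\sum_(s : 'I_B.+1) p i s * (minn (c i s) t)%:R) *
        (\sum_(t' : 'I_C.+1 | (t' <= t)%N) y i t') <= 2 * t%:R) ->
  (* ... lying in beta * P_Iout, so that chi^io applies to ybar *)
  in_scaledP beta Iout (ybar y) ->
  Eh_psi_c f p c y chi <= favg_io f p c y chi.
Proof.
move=> _ _ _ fmono _ pge0 p0 p1 _ _ _ _ CRS yge0 _ yle1 _ _ Hsc.
have [chige0 _ chisub _ _] := CRS _ Hsc.
have ybge0 : forall i, 0 <= ybar y i by move=> i; apply: sumr_ge0 => t _.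
have twge0 : forall (S : {set 'I_n}) tt, 0 <= time_w y S tt.
  move=> S tt; apply: prodr_ge0 => i _; case: ifP => _ //.
  by apply: divr_ge0.
rewrite /Eh_psi_c /favg_io.
rewrite (@h_identity R n B C p y (fun v => \sum_S chi (ybar y) (Rv v) S *
  \sum_tt time_w y (Rv v) tt * f (psi_c c v S tt))) //.
apply: ler_sum => phi _.
have [->|Hphi] := eqVneq (state_w p phi) 0; first by rewrite !mul0r.
apply: ler_wpM2l; first by apply: prodr_ge0 => i _.
apply: ler_sum => Rs _.
have [->|Hb] := eqVneq (bern_set (ybar y) Rs) 0; first by rewrite !mul0r.
apply: ler_wpM2l.
  apply: prodr_ge0 => i _; case: ifP => _ //; by rewrite subr_ge0.
have phinz : forall i, phi i != ord0.
  move=> i; apply/negP => /eqP E; move/eqP: Hphi; apply.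
  by rewrite /state_w (bigD1 i) //= E p0 mul0r.
have ynz : forall i, i \in Rs -> ybar y i != 0.
  move=> i iR; apply/negP => /eqP E; move/eqP: Hb; apply.
  by rewrite /bern_set (bigD1 i) //= iR E mul0r.
have RvE : Rv (restrict phi Rs) = Rs.
  apply/setP => i; rewrite inE ffunE; case: (boolP (i \in Rs)) => _.
    by rewrite phinz.
  by rewrite eqxx.
rewrite RvE.
apply: ler_sum => S _.
have [->|chinz] := eqVneq (chi (ybar y) Rs S) 0; first by rewrite !mul0r.
have [Ssub _] := chisub Rs S chinz.
apply: ler_wpM2l; first exact: chige0.
apply: le_trans (_ : _ <= \sum_tt time_w y Rs tt *
   f (restrict phi (io_selected c phi (proj S tt) S))) _.
  apply: ler_sum => tt _; apply: ler_wpM2l => //.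
  by apply: fmono; apply: vle_main.
rewrite (@fiber R _ _ (time_w y Rs) (proj S)
   (fun tt => f (restrict phi (io_selected c phi tt S)))).
rewrite le_eqVlt; apply/orP; left; apply/eqP.
by apply: eq_bigr => tt' _; rewrite time_marg // mulrC.
Qed.
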